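(* For an integer $z\ge1$ let $$\varphi_z(v)=\frac{1-\frac{4q^2-h^z}{2q(1-2q)}(e^v-1)}{1-\frac{2q-h^z}{1-2q}(e^v-1)},\qquad \psi_z(v)=\frac{e^v}{1-\frac{2q-h^z}{1-2q}(e^v-1)},$$ and $m_z=h^z/(2q)$. For $\log(1-2q(1-2q))<v<\log(1+2q(1-2q))$ we have $$\varphi_z(v)=\exp\big(m_z(v+O(v^2))\big),\qquad v\to0,$$ where the $O(v^2)$ term is uniform in $z\ge1$, and $$\psi_z(v)\le\frac{1+|e^v-1|}{1-\frac{|e^v-1|}{1-2q}}.$$
   Context: Let $0<q<p<1$ with $p+q=1$ and $h=q/p$. *)

(* Defs.v *)
From Stdlib Require Import Reals Lra.
Open Scope R_scope.

Definition hh (p q : R) : R := q / p.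

Definition phi_z (p q : R) (z : nat) (v : R) : R :=
  (1 - (4 * q ^ 2 - hh p q ^ z) / (2 * q * (1 - 2 * q)) * (exp v - 1))
  / (1 - (2 * q - hh p q ^ z) / (1 - 2 * q) * (exp v - 1)).

Definition psi_z (p q : R) (z : nat) (v : R) : R :=
  exp v / (1 - (2 * q - hh p q ^ z) / (1 - 2 * q) * (exp v - 1)).

Definition m_z (p q : R) (z : nat) : R := hh p q ^ z / (2 * q).

Definition in_range (q v : R) : Prop :=
  ln (1 - 2 * q * (1 - 2 * q)) < v < ln (1 + 2 * q * (1 - 2 * q)).

(* Main.v *)
Require Import Defs.
From Stdlib Require Import Reals Lra Psatz.
Open Scope R_scope.

Lemma ln_bounds (y : R) : 0 < y -> 1 - / y <= ln y <= y - 1.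
Proof.
  intros Hy. split.
  - assert (H := exp_ineq1_le (ln (/ y))).
    rewrite exp_ln in H by (apply Rinv_0_lt_compat; lra).
    rewrite ln_Rinv in H by lra. lra.
  - assert (H := exp_ineq1_le (ln y)). rewrite exp_ln in H by lra. lra.
Qed.

Lemma abs_le_iff (a b : R) : Rabs a <= b <-> - b <= a <= b.
Proof. unfold Rabs; destruct Rcase_abs; split; intros; lra. Qed.

Lemma exp_bounds (v : R) : - (1/2) <= v <= 1/2 ->
  0 <= exp v - 1 - v <= 2 * v ^ 2.
Proof.
  intros Hv. assert (H1 := exp_ineq1_le v). assert (H2 := exp_ineq1_le (- v)).
  assert (H3 : exp v * exp (- v) = 1).
  { rewrite <- exp_plus. replace (v + - v) with 0 by ring. apply exp_0. }
  assert (H4 : exp v * (1 - v) <= 1).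
  { rewrite <- H3. apply Rmult_le_compat_l; [apply Rlt_le, exp_pos | lra]. }
  split; [lra|]. nra.
Qed.

Lemma aux (a B s i : R) : 0 <= a <= B -> 0 <= s -> 0 <= i <= 2 -> a * s * i <= 2 * B * s.
Proof. intros. assert (0 <= a * s) by nra. assert (a * s * i <= a * s * 2) by nra. assert (a * s <= B * s) by nra. nra. Qed.

Lemma core (b c m x B C : R) : 0 < m -> - B <= b <= B -> - C <= c <= C ->
  B * Rabs x <= 1/2 -> C * Rabs x <= 1/2 -> b - c = m ->
  0 < (1 - c * x) / (1 - b * x) /\
  Rabs (ln ((1 - c * x) / (1 - b * x)) / m - x) <= 2 * (B + C) * x ^ 2.
Proof.
  intros Hm Hb Hc HB HC Hbc.
  assert (Hbx : - (1/2) <= b * x <= 1/2).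
  { unfold Rabs in HB; destruct Rcase_abs in HB; split; nra. }
  assert (Hcx : - (1/2) <= c * x <= 1/2).
  { unfold Rabs in HC; destruct Rcase_abs in HC; split; nra. }
  set (N := 1 - c * x) in *. set (D := 1 - b * x) in *.
  assert (HN : 1/2 <= N) by (unfold N; lra).
  assert (HD : 1/2 <= D) by (unfold D; lra).
  assert (Hy : 0 < N / D) by (apply Rdiv_lt_0_compat; lra).
  split; [exact Hy|].
  destruct (ln_bounds _ Hy) as [L1 L2].
  assert (E1 : N / D - 1 = m * (x / D)) by (rewrite <- Hbc; unfold N, D in *; field; lra).
  assert (E2 : 1 - / (N / D) = m * (x / N)) by (rewrite <- Hbc; unfold N, D in *; field; lra).
  set (L := ln (N / D)) in *.
  assert (U1 : L / m <= x / D).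
  { apply (Rmult_le_reg_l m); [lra|]. replace (m * (L / m)) with L by (field; lra). lra. }
  assert (U2 : x / N <= L / m).
  { apply (Rmult_le_reg_l m); [lra|]. replace (m * (L / m)) with L by (field; lra). lra. }
  assert (F1 : x / D - x = b * x * x / D) by (unfold D in *; field; lra).
  assert (F2 : x / N - x = c * x * x / N) by (unfold N in *; field; lra).
  assert (G1 : Rabs (b * x * x / D) <= 2 * B * x ^ 2).
  { unfold Rdiv. rewrite Rabs_mult, Rabs_mult, Rabs_mult, Rabs_inv.
    rewrite (Rabs_right D) by lra.
    assert (Rabs b <= B) by (apply abs_le_iff; lra).
    assert (/ D <= 2).
    { replace 2 with (/ (1/2)) by field. apply Rinv_le_contravar; lra. }
    assert (0 <= Rabs x * Rabs x) by (apply Rmult_le_pos; apply Rabs_pos).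
    assert (Rabs x * Rabs x = x ^ 2) by (rewrite <- Rabs_mult; simpl; rewrite Rmult_1_r; apply Rabs_right; nra).
    assert (0 <= / D) by (left; apply Rinv_0_lt_compat; lra).
    assert (0 <= Rabs b) by apply Rabs_pos.
    replace (Rabs b * Rabs x * Rabs x * / D) with (Rabs b * (Rabs x * Rabs x) * / D) by ring.
    rewrite H2 in *. apply aux; lra. }
  assert (G2 : Rabs (c * x * x / N) <= 2 * C * x ^ 2).
  { unfold Rdiv. rewrite Rabs_mult, Rabs_mult, Rabs_mult, Rabs_inv.
    rewrite (Rabs_right N) by lra.
    assert (Rabs c <= C) by (apply abs_le_iff; lra).
    assert (/ N <= 2).
    { replace 2 with (/ (1/2)) by field. apply Rinv_le_contravar; lra. }
    assert (0 <= Rabs x * Rabs x) by (apply Rmult_le_pos; apply Rabs_pos).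
    assert (Rabs x * Rabs x = x ^ 2) by (rewrite <- Rabs_mult; simpl; rewrite Rmult_1_r; apply Rabs_right; nra).
    assert (0 <= / N) by (left; apply Rinv_0_lt_compat; lra).
    assert (0 <= Rabs c) by apply Rabs_pos.
    replace (Rabs c * Rabs x * Rabs x * / N) with (Rabs c * (Rabs x * Rabs x) * / N) by ring.
    rewrite H2 in *. apply aux; lra. }
  apply abs_le_iff in G1. apply abs_le_iff in G2.
  apply abs_le_iff. assert (0 <= x ^ 2) by nra. split; nra.
Qed.

Lemma pow_le_base (h : R) (n : nat) : 0 <= h <= 1 -> h ^ (S n) <= h.
Proof.
  intros H. induction n. simpl; lra.
  change (h ^ S (S n)) with (h * h ^ (S n)). nra.
Qed.

Theorem lemma7p1 (p q : R) (hq : 0 < q) (hqp : q < p) (hp1 : p < 1)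
  (hpq : p + q = 1) :
  (exists C delta : R, 0 < C /\ 0 < delta /\
     forall (z : nat) (v : R), (1 <= z)%nat -> in_range q v -> Rabs v < delta ->
       exists r : R, Rabs r <= C * v ^ 2 /\
         phi_z p q z v = exp (m_z p q z * (v + r)))
  /\
  (forall (z : nat) (v : R), (1 <= z)%nat -> in_range q v ->
     psi_z p q z v <= (1 + Rabs (exp v - 1)) / (1 - Rabs (exp v - 1) / (1 - 2 * q))).
Proof.
  assert (Hs : 0 < 1 - 2 * q) by lra.
  assert (Hh0 : 0 < hh p q) by (unfold hh; apply Rdiv_lt_0_compat; lra).
  assert (Hh1 : hh p q < 2 * q).
  { unfold hh. apply (Rmult_lt_reg_r p); [lra|]. replace (q / p * p) with q by (field; lra). nra. }
  assert (Hhz : forall z, (1 <= z)%nat -> 0 < hh p q ^ z <= hh p q).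
  { intros z Hz. destruct z; [lia|]. split; [apply pow_lt; lra|]. apply pow_le_base; lra. }
  set (B0 := 2 * q / (1 - 2 * q)).
  set (C0 := (4 * q ^ 2 + 1) / (2 * q * (1 - 2 * q))).
  assert (HB0 : 0 < B0) by (unfold B0; apply Rdiv_lt_0_compat; lra).
  assert (HC0 : 0 < C0).
  { unfold C0; apply Rdiv_lt_0_compat; [nra | apply Rmult_lt_0_compat; lra]. }
  split.
  - exists (8 * (B0 + C0) + 2), (/ (4 * (B0 + C0) + 2)).
    split; [lra|]. split; [apply Rinv_0_lt_compat; lra|].
    intros z v Hz _ Hv.
    destruct (Hhz z Hz) as [Hz1 Hz2].
    set (hz := hh p q ^ z) in *.
    set (b := (2 * q - hz) / (1 - 2 * q)).
    set (c := (4 * q ^ 2 - hz) / (2 * q * (1 - 2 * q))).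
    set (m := m_z p q z).
    assert (Hm : m = hz / (2 * q)) by reflexivity.
    assert (Hmpos : 0 < m) by (rewrite Hm; apply Rdiv_lt_0_compat; lra).
    assert (Hbc : b - c = m) by (rewrite Hm; unfold b, c; field; lra).
    assert (Hb : - B0 <= b <= B0).
    { unfold b, B0. assert (0 < / (1 - 2 * q)) by (apply Rinv_0_lt_compat; lra).
      unfold Rdiv. split; nra. }
    assert (Hc : - C0 <= c <= C0).
    { unfold c, C0. assert (0 < / (2 * q * (1 - 2 * q))) by (apply Rinv_0_lt_compat; nra).
      assert (hz <= 1) by lra. unfold Rdiv. split; nra. }
    assert (Hd : / (4 * (B0 + C0) + 2) <= 1/2).
    { replace (1/2) with (/ 2) by field. apply Rinv_le_contravar; lra. }
    assert (Hv' : Rabs v * (4 * (B0 + C0) + 2) <= 1).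
    { replace 1 with (/ (4 * (B0 + C0) + 2) * (4 * (B0 + C0) + 2)) by (field; lra).
      apply Rmult_le_compat_r; lra. }
    assert (Hv2 : - (1/2) <= v <= 1/2) by (apply abs_le_iff; lra).
    destruct (exp_bounds v Hv2) as [Ex1 Ex2].
    set (x := exp v - 1) in *.
    assert (Hv3 : Rabs (x - v) <= 2 * v ^ 2) by (apply abs_le_iff; nra).
    assert (Hvv : v ^ 2 = Rabs v * Rabs v).
    { rewrite <- Rabs_mult. simpl. rewrite Rmult_1_r. symmetry; apply Rabs_right; nra. }
    assert (Hx : Rabs x <= 2 * Rabs v).
    { assert (Rabs x <= Rabs (x - v) + Rabs v).
      { replace x with ((x - v) + v) at 1 by ring. apply Rabs_triang. }
      assert (0 <= Rabs v) by apply Rabs_pos. nra. }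
    assert (0 <= Rabs v) by apply Rabs_pos.
    assert (0 <= Rabs x) by apply Rabs_pos.
    assert (HB : B0 * Rabs x <= 1/2) by nra.
    assert (HC : C0 * Rabs x <= 1/2) by nra.
    destruct (core b c m x B0 C0 Hmpos Hb Hc HB HC Hbc) as [Hpos Hbound].
    exists (ln ((1 - c * x) / (1 - b * x)) / m - v). split.
    + replace (ln ((1 - c * x) / (1 - b * x)) / m - v)
        with ((ln ((1 - c * x) / (1 - b * x)) / m - x) + (x - v)) by ring.
      eapply Rle_trans; [apply Rabs_triang|].
      assert (x ^ 2 = Rabs x * Rabs x).
      { rewrite <- Rabs_mult. simpl. rewrite Rmult_1_r. symmetry; apply Rabs_right; nra. }
      assert (Rabs x * Rabs x <= 4 * (v ^ 2)) by nra.
      assert (2 * (B0 + C0) * x ^ 2 <= 8 * (B0 + C0) * v ^ 2) by nra.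
      lra.
    + replace (m * (v + (ln ((1 - c * x) / (1 - b * x)) / m - v)))
        with (ln ((1 - c * x) / (1 - b * x))) by (field; lra).
      rewrite exp_ln by exact Hpos. reflexivity.
  - intros z v Hz [Hl Hu].
    destruct (Hhz z Hz) as [Hz1 Hz2].
    set (a := 2 * q * (1 - 2 * q)) in *.
    assert (Ha : 0 < a < 2 * q) by (unfold a; nra).
    assert (Hl' : 1 - a < exp v).
    { rewrite <- (exp_ln (1 - a)) by nra. apply exp_increasing; exact Hl. }
    assert (Hu' : exp v < 1 + a).
    { rewrite <- (exp_ln (1 + a)) by nra. apply exp_increasing; exact Hu. }
    unfold psi_z. set (hz := hh p q ^ z) in *.
    set (b := (2 * q - hz) / (1 - 2 * q)).
    set (x := exp v - 1) in *.
    set (w := Rabs x).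
    assert (Hw : - w <= x <= w) by (apply abs_le_iff; unfold w; lra).
    assert (Hwa : w < a) by (unfold w, x, Rabs; destruct Rcase_abs; lra).
    assert (Hbs : b * (1 - 2 * q) = 2 * q - hz) by (unfold b; field; lra).
    assert (Hb0 : 0 <= b).
    { unfold b. apply Rmult_le_pos; [lra | left; apply Rinv_0_lt_compat; lra]. }
    assert (Hws : w / (1 - 2 * q) * (1 - 2 * q) = w) by (field; lra).
    assert (Hw0 : 0 <= w) by (unfold w; apply Rabs_pos).
    assert (H1 : b * x <= w / (1 - 2 * q)).
    { apply (Rmult_le_reg_r (1 - 2 * q)); [lra|]. rewrite Hws.
      assert (b * x <= b * w) by nra. nra. }
    assert (H2 : w / (1 - 2 * q) < 1).
    { apply (Rmult_lt_reg_r (1 - 2 * q)); [lra|]. rewrite Hws. assert (a < 1 - 2 * q) by (unfold a; nra). lra. }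
    apply (Rle_trans _ (exp v / (1 - w / (1 - 2 * q)))).
    + apply Rmult_le_compat_l; [left; apply exp_pos|]. apply Rinv_le_contravar; lra.
    + apply Rmult_le_compat_r; [left; apply Rinv_0_lt_compat; lra|]. unfold x in Hw. lra.
Qed.
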